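(* Let $\gamma\in(0,1)$ and let $\rho(w,t)>0$, $w>0$, $t\ge0$, be a sufficiently smooth solution of the yard-sale model equation $$\partial_t\rho(w,t)=\partial_w^2\Big[\Big(\frac{\gamma}{2}\int_0^\infty \min(w,x)^2\,\rho(x,t)\,dx\Big)\rho(w,t)\Big],$$ with $\rho(0,t)=0$, $\lim_{w\to\infty}\rho(w,t)=0$ for $t>0$, and initial condition $\rho_0$ a positive probability density on $(0,\infty)$ with $\int_0^\infty\rho_0(w)\,dw=1=\int_0^\infty w\,\rho_0(w)\,dw$; assume also that the boundary terms at $w=0$ vanish, i.e. $D\rho\to0$ and $w\,\partial_w(D\rho)\to0$ and $\partial_w(D\rho)\to 0$ as $w\to0^+$, where $D[w,t,\rho]=\frac{\gamma}{2}\int_0^\infty\min(w,x)^2\rho(x,t)\,dx$. Let $F(w,t)=\int_0^w\rho(y,t)\,dy$, $G(\cdot,t)$ its inverse, and $\mathcal{L}(f,t)=\int_0^{G(f,t)}y\,\rho(y,t)\,dy$ the Lorenz curve. Then for $f\in(0,1)$, $t>0$, $$\partial_t\mathcal{L}(f,t)=-\frac{1}{\partial_f^2\mathcal{L}(f,t)}\,\frac{\gamma}{2}\int_0^1\min\big(\partial_g\mathcal{L}(g,t),\,\partial_f\mathcal{L}(f,t)\big)^2\,dg .$$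
   Context: Here $\min(a,b)$ is the minimum of $a$ and $b$. The equation models the evolution of the density of agents in wealth space $w>0$; it conserves total probability and total wealth (first moment), both normalized to $1$. *)

(* Defs.v *)
From Stdlib Require Import Reals.
From Coquelicot Require Import Coquelicot.
Open Scope R_scope.

Definition cont_half (h : R -> R -> R) (w t : R) : Prop :=
  filterlim (fun p : R * R => h (fst p) (snd p))
    (within (fun p : R * R => 0 <= fst p) (locally (w, t)))
    (locally (h w t)).

Definition Dcoef (gamma : R) (rho : R -> R -> R) (w t : R) : R :=
  gamma / 2 * RInt_gen (fun x => (Rmin w x) ^ 2 * rho x t)
                (at_point 0) (Rbar_locally p_infty).

Definition Fcdf (rho : R -> R -> R) (w t : R) : R :=
  RInt (fun y => rho y t) 0 w.

Definition Lorenz (rho : R -> R -> R) (G : R -> R -> R) (f t : R) : R :=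
  RInt (fun y => y * rho y t) 0 (G f t).

(* Main.v *)
Require Import Defs.
From Stdlib Require Import Reals Lra Ranalysis5.
From Coquelicot Require Import Coquelicot.
Open Scope R_scope.


Lemma Rmax0_id x : 0 <= x -> Rmax 0 x = x.
Proof. intros; unfold Rmax; destruct Rle_dec; lra. Qed.

Lemma RInt_r0 (r : R -> R) w : 0 <= w ->
  RInt r 0 w = RInt (fun y => r (Rmax 0 y)) 0 w.
Proof.
  intros Hw; apply RInt_ext; intros x Hx.
  rewrite Rmin_left in Hx by lra. rewrite Rmax0_id; lra.
Qed.

Lemma F_incr (r : R -> R)
  (Hc : forall y, continuous (fun y => r (Rmax 0 y)) y)
  (Hp : forall w, 0 < w -> 0 < r w) :
  forall a b, 0 <= a -> a < b -> RInt r 0 a < RInt r 0 b.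
Proof.
  intros a b Ha Hab.
  rewrite (RInt_r0 r a), (RInt_r0 r b) by lra.
  rewrite <- (RInt_Chasles _ 0 a b).
  - assert (0 < RInt (fun y => r (Rmax 0 y)) a b).
    { apply RInt_gt_0; auto. intros x Hx. rewrite Rmax0_id by lra. apply Hp; lra. }
    simpl. unfold plus; simpl. lra.
  - apply ex_RInt_continuous; auto.
  - apply ex_RInt_continuous; auto.
Qed.


Lemma F0_deriv (r : R -> R)
  (Hc : forall y, continuous (fun y => r (Rmax 0 y)) y) x :
  is_derive (fun w => RInt (fun y => r (Rmax 0 y)) 0 w) x (r (Rmax 0 x)).
Proof.
  apply (is_derive_RInt (fun y => r (Rmax 0 y)) _ 0); auto.
  apply filter_forall; intros b. apply (RInt_correct (V:=R_CompleteNormedModule)), (ex_RInt_continuous (V:=R_CompleteNormedModule)); auto.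
Qed.

Lemma F_deriv (r : R -> R)
  (Hc : forall y, continuous (fun y => r (Rmax 0 y)) y) x : 0 < x ->
  is_derive (fun w => RInt r 0 w) x (r x).
Proof.
  intros Hx.
  apply is_derive_ext_loc with (fun w => RInt (fun y => r (Rmax 0 y)) 0 w).
  - exists (mkposreal x Hx); intros y Hy. simpl in Hy.
    unfold ball in Hy; simpl in Hy; unfold AbsRing_ball, abs, minus, plus, opp in Hy; simpl in Hy.
    apply Rabs_lt_between in Hy.
    rewrite (RInt_r0 r y); [reflexivity|lra].
  - rewrite <- (Rmax0_id x) at 2 by lra. apply F0_deriv; auto.
Qed.


Lemma G_mono (r G : R -> R)
  (Hc : forall y, continuous (fun y => r (Rmax 0 y)) y)
  (Hp : forall w, 0 < w -> 0 < r w)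
  (HG : forall g, 0 < g < 1 -> 0 < G g /\ RInt r 0 (G g) = g) :
  forall g h, 0 < g < 1 -> 0 < h < 1 -> g < h -> G g < G h.
Proof.
  intros g h Hg Hh Hgh.
  destruct (HG g Hg) as [Pg Fg]; destruct (HG h Hh) as [Ph Fh].
  destruct (Rlt_le_dec (G g) (G h)) as [?|Hle]; auto.
  destruct (Req_dec (G h) (G g)) as [E|NE].
  - rewrite E in Fh; lra.
  - assert (RInt r 0 (G h) < RInt r 0 (G g)) by (apply F_incr; auto; lra). lra.
Qed.

Lemma G_mono_le (r G : R -> R)
  (Hc : forall y, continuous (fun y => r (Rmax 0 y)) y)
  (Hp : forall w, 0 < w -> 0 < r w)
  (HG : forall g, 0 < g < 1 -> 0 < G g /\ RInt r 0 (G g) = g) :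
  forall g h, 0 < g < 1 -> 0 < h < 1 -> g <= h -> G g <= G h.
Proof.
  intros g h Hg Hh Hgh. destruct (Req_dec g h) as [->|]; [lra|].
  left; apply (G_mono r G); auto; lra.
Qed.

Lemma G_deriv (r G : R -> R)
  (Hc : forall y, continuous (fun y => r (Rmax 0 y)) y)
  (Hp : forall w, 0 < w -> 0 < r w)
  (HG : forall g, 0 < g < 1 -> 0 < G g /\ RInt r 0 (G g) = g) :
  forall f, 0 < f < 1 -> is_derive G f (1 / r (G f)).
Proof.
  intros f Hf.
  set (F0 := fun w => RInt (fun y => r (Rmax 0 y)) 0 w).
  pose (dF0 := fun a => exist _ (r (Rmax 0 a)) (proj1 (is_derive_Reals _ _ _) (F0_deriv r Hc a)) : derivable_pt F0 a).
  assert (HF0 : forall g, 0 < g < 1 -> F0 (G g) = g).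
  { intros g Hg. destruct (HG g Hg) as [P E]. unfold F0. rewrite <- RInt_r0; lra. }
  assert (Hmono := G_mono r G Hc Hp HG).
  assert (Hmle := G_mono_le r G Hc Hp HG).
  set (lb := f / 2). set (ub := (1 + f) / 2).
  assert (Hlb : 0 < lb < 1) by (unfold lb; lra).
  assert (Hub : 0 < ub < 1) by (unfold ub; lra).
  assert (Hcont : continuity_pt G f).
  { apply (continuity_pt_recip_interv F0 G (G lb) (G ub)).
    - apply Hmono; auto; unfold lb, ub; lra.
    - intros x y Hx Hxy Hy. unfold F0. rewrite <- !RInt_r0.
      apply F_incr; auto. destruct (HG lb Hlb); lra.
      destruct (HG lb Hlb); lra. destruct (HG lb Hlb); lra.
    - intros x H1 H2. rewrite !HF0 in H1, H2 by auto. unfold comp, id. apply HF0. lra.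
    - intros x H1 H2. rewrite !HF0 in H1, H2 by auto. split; apply Hmle; auto; lra.
    - intros a _. apply derivable_continuous_pt, dF0.
    - rewrite !HF0 by auto. unfold lb, ub; lra. }
  assert (Pincr : G lb <= G f <= G ub).
  { split; apply Hmle; auto; unfold lb, ub; lra. }
  apply is_derive_Reals.
  assert (E : r (G f) = derive_pt F0 (G f) ((fun a (_ : G lb <= a <= G ub) => dF0 a) (G f) Pincr)).
  { simpl. destruct (HG f Hf). rewrite Rmax0_id; [reflexivity|lra]. }
  rewrite E.
  apply (derivable_pt_lim_recip_interv F0 G lb ub f (fun a _ => dF0 a) Hcont).
  - unfold lb, ub; lra.
  - unfold lb, ub; lra.
  - exact Pincr.
  - intros x Hx. unfold comp, id. apply HF0; lra.
  - change (derive_pt F0 (G f) (dF0 (G f))) with (r (Rmax 0 (G f))). destruct (HG f Hf) as [P _]. rewrite Rmax0_id by lra. specialize (Hp _ P). lra.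
Qed.


Lemma cont_eps (k : R -> R) x :
  (forall eps, 0 < eps -> exists d, 0 < d /\ forall y, Rabs (y - x) < d -> Rabs (k y - k x) < eps) ->
  continuous k x.
Proof.
  intros H. apply continuity_pt_filterlim.
  intros eps Heps. destruct (H eps Heps) as [d [Hd Hy]].
  exists d; split; auto. intros y [_ Hyx]. apply Hy. exact Hyx.
Qed.

Lemma Rmax0_lip x y : Rabs (Rmax 0 y - Rmax 0 x) <= Rabs (y - x).
Proof.
  unfold Rmax; destruct (Rle_dec 0 y), (Rle_dec 0 x);
  unfold Rabs; repeat destruct Rcase_abs; lra.
Qed.

Lemma cont_Rmax0 x : continuous (fun y => Rmax 0 y) x.
Proof.
  apply cont_eps. intros eps He. exists eps; split; auto.
  intros y Hy. eapply Rle_lt_trans; [apply Rmax0_lip|auto].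
Qed.

Lemma cont_weight (r : R -> R) (h : R -> R)
  (Hc : forall y, continuous (fun y => r (Rmax 0 y)) y)
  (Hh : forall y, continuous h y) :
  forall y, continuous (fun y => h (Rmax 0 y) * r (Rmax 0 y)) y.
Proof.
  intros y. apply (continuous_mult (K:=R_AbsRing) (fun y => h (Rmax 0 y)) (fun y => r (Rmax 0 y))); auto.
  apply (continuous_comp (fun y => Rmax 0 y) h); auto. apply cont_Rmax0.
Qed.

Lemma cont_id x : continuous (fun y : R => y) x.
Proof. apply cont_eps. intros eps He; exists eps; split; auto. Qed.

Lemma Lor_deriv (r G : R -> R)
  (Hc : forall y, continuous (fun y => r (Rmax 0 y)) y)
  (Hp : forall w, 0 < w -> 0 < r w)
  (HG : forall g, 0 < g < 1 -> 0 < G g /\ RInt r 0 (G g) = g) :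
  forall g, 0 < g < 1 -> is_derive (fun h => RInt (fun y => y * r y) 0 (G h)) g (G g).
Proof.
  intros g Hg.
  destruct (HG g Hg) as [P _].
  assert (H1 : is_derive (fun w => RInt (fun y => y * r y) 0 w) (G g) (G g * r (G g))).
  { apply (F_deriv (fun y => y * r y)); auto.
    apply (cont_weight r (fun y => y)); auto. apply cont_id. }
  assert (H2 := G_deriv r G Hc Hp HG g Hg).
  assert (H3 := is_derive_comp _ _ _ _ _ H1 H2).
  assert (E : scal (1 / r (G g)) (G g * r (G g)) = G g).
  { unfold scal; simpl; unfold mult; simpl. specialize (Hp _ P). field. lra. }
  rewrite <- E at 1. exact H3.
Qed.

Lemma loc_in01 g : 0 < g < 1 -> locally g (fun h => 0 < h < 1).
Proof.
  intros Hg. assert (0 < Rmin g (1 - g)) by (apply Rmin_pos; lra).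
  exists (mkposreal _ H). intros y Hy. simpl in Hy.
  unfold ball in Hy; simpl in Hy; unfold AbsRing_ball, abs, minus, plus, opp in Hy; simpl in Hy.
  apply Rabs_lt_between in Hy. assert (Rmin g (1-g) <= g) by apply Rmin_l.
  assert (Rmin g (1-g) <= 1 - g) by apply Rmin_r. lra.
Qed.

Lemma Lor_spatial (r G : R -> R)
  (Hc : forall y, continuous (fun y => r (Rmax 0 y)) y)
  (Hp : forall w, 0 < w -> 0 < r w)
  (HG : forall g, 0 < g < 1 -> 0 < G g /\ RInt r 0 (G g) = g) f :
  0 < f < 1 ->
  let L := fun h => RInt (fun y => y * r y) 0 (G h) in
  ex_derive L f /\ ex_derive_n L 2 f /\ Derive_n L 2 f = 1 / r (G f) /\
  (forall g, 0 < g < 1 -> Derive L g = G g).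
Proof.
  intros Hf L.
  assert (DL : forall g, 0 < g < 1 -> Derive L g = G g).
  { intros g Hg. apply is_derive_unique, Lor_deriv; auto. }
  assert (Loc : locally f (fun h => G h = Derive L h)).
  { eapply filter_imp; [|apply loc_in01; eauto]. intros h Hh; simpl. rewrite DL; auto. }
  assert (HGd := G_deriv r G Hc Hp HG f Hf).
  split; [exists (G f); apply Lor_deriv; auto|].
  split; [|split; auto].
  - simpl. eapply ex_derive_ext_loc; [exact Loc|]. eexists; exact HGd.
  - simpl. transitivity (Derive G f). { symmetry. apply Derive_ext_loc. exact Loc. } apply is_derive_unique; auto.
Qed.


Lemma ex_RInt_w (r h : R -> R)
  (Hc : forall y, continuous (fun y => r (Rmax 0 y)) y)
  (Hh : forall y, continuous h y) a b : 0 <= a -> 0 <= b ->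
  ex_RInt (fun y => h y * r y) a b.
Proof.
  intros Ha Hb.
  apply (ex_RInt_ext (fun y => h (Rmax 0 y) * r (Rmax 0 y))).
  - intros x Hx. assert (0 < x).
    { destruct (Rle_dec a b). rewrite Rmin_left in Hx; lra. rewrite Rmin_right in Hx; lra. }
    rewrite Rmax0_id; lra.
  - apply (ex_RInt_continuous (V:=R_CompleteNormedModule)). intros; apply cont_weight; auto.
Qed.

Lemma ex_RInt_r (r : R -> R)
  (Hc : forall y, continuous (fun y => r (Rmax 0 y)) y) a b : 0 <= a -> 0 <= b ->
  ex_RInt r a b.
Proof.
  intros Ha Hb. apply (ex_RInt_ext (fun y => 1 * r y) r).
  - intros x _. apply Rmult_1_l.
  - apply (ex_RInt_w r (fun _ => 1)); auto. intros; apply continuous_const.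
Qed.

Lemma cont_sq x : continuous (fun y : R => y ^ 2) x.
Proof.
  apply (continuous_ext (fun y : R => mult (K:=R_AbsRing) y y)). intros; unfold mult; simpl; ring.
  apply (continuous_mult (K:=R_AbsRing) (fun y => y) (fun y => y)); apply cont_id.
Qed.

Lemma W_deriv (r G h : R -> R)
  (Hc : forall y, continuous (fun y => r (Rmax 0 y)) y)
  (Hp : forall w, 0 < w -> 0 < r w)
  (HG : forall g, 0 < g < 1 -> 0 < G g /\ RInt r 0 (G g) = g)
  (Hh : forall y, continuous h y) :
  forall g, 0 < g < 1 -> is_derive (fun k => RInt (fun y => h y * r y) 0 (G k)) g (h (G g)).
Proof.
  intros g Hg.
  destruct (HG g Hg) as [P _].
  assert (H1 : is_derive (fun w => RInt (fun y => h y * r y) 0 w) (G g) (h (G g) * r (G g))).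
  { apply (F_deriv (fun y => h y * r y)); auto.
    apply (cont_weight r h); auto. }
  assert (H2 := G_deriv r G Hc Hp HG g Hg).
  assert (H3 := is_derive_comp _ _ _ _ _ H1 H2).
  assert (E : scal (1 / r (G g)) (h (G g) * r (G g)) = h (G g)).
  { unfold scal; simpl; unfold mult; simpl. specialize (Hp _ P). field. lra. }
  rewrite <- E at 1. exact H3.
Qed.

Lemma G_small (r G : R -> R)
  (Hc : forall y, continuous (fun y => r (Rmax 0 y)) y)
  (Hp : forall w, 0 < w -> 0 < r w)
  (HG : forall g, 0 < g < 1 -> 0 < G g /\ RInt r 0 (G g) = g) a :
  0 < a -> exists eta, 0 < eta /\ forall y, 0 < y < 1 -> y < eta -> G y < a.
Proof.
  intros Ha. exists (RInt r 0 a). split.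
  - assert (RInt r 0 0 < RInt r 0 a) by (apply F_incr; auto; lra).
    rewrite RInt_point in H. exact H.
  - intros y Hy Hye. destruct (Rlt_le_dec (G y) a) as [|Hle]; auto.
    destruct (HG y Hy) as [P E].
    destruct (Req_dec a (G y)) as [Eq|NE]. rewrite <- Eq in E; lra.
    assert (RInt r 0 a < RInt r 0 (G y)) by (apply F_incr; auto; lra). lra.
Qed.

Lemma Rmin_lip f x y : Rabs (Rmin y f - Rmin x f) <= Rabs (y - x).
Proof.
  unfold Rmin; destruct (Rle_dec y f), (Rle_dec x f);
  unfold Rabs; repeat destruct Rcase_abs; lra.
Qed.

Lemma cont_Rmin f x : continuous (fun y => Rmin y f) x.
Proof.
  apply cont_eps. intros eps He. exists eps; split; auto.
  intros y Hy. eapply Rle_lt_trans; [apply Rmin_lip|auto].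
Qed.


Lemma zero_small a K f : 0 < f -> 0 <= K -> (forall e, 0 < e < f -> Rabs a <= K * e) -> a = 0.
Proof.
  intros Hf HK H. destruct (Req_dec a 0) as [|NE]; auto. exfalso.
  assert (Ha : 0 < Rabs a) by (apply Rabs_pos_lt; auto).
  set (e := Rmin (f/2) (Rabs a / (2 * (K + 1)))).
  assert (He1 : e <= f/2) by apply Rmin_l.
  assert (He2 : e <= Rabs a / (2 * (K + 1))) by apply Rmin_r.
  assert (He0 : 0 < e) by (apply Rmin_pos; [lra| apply Rdiv_lt_0_compat; lra]).
  specialize (H e ltac:(lra)).
  assert (K * e <= (K+1) * (Rabs a / (2 * (K + 1)))) by (apply Rmult_le_compat; lra).
  assert ((K+1) * (Rabs a / (2 * (K + 1))) = Rabs a / 2) by (field; lra).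
  lra.
Qed.

Lemma cont_G (r G : R -> R)
  (Hc : forall y, continuous (fun y => r (Rmax 0 y)) y)
  (Hp : forall w, 0 < w -> 0 < r w)
  (HG : forall g, 0 < g < 1 -> 0 < G g /\ RInt r 0 (G g) = g) g :
  0 < g < 1 -> continuous G g.
Proof.
  intros Hg. apply (ex_derive_continuous (K:=R_AbsRing) (V:=R_NormedModule)). eexists; apply (G_deriv r G Hc Hp HG g Hg).
Qed.

Lemma int_G2 (r G : R -> R)
  (Hc : forall y, continuous (fun y => r (Rmax 0 y)) y)
  (Hp : forall w, 0 < w -> 0 < r w)
  (HG : forall g, 0 < g < 1 -> 0 < G g /\ RInt r 0 (G g) = g) f :
  0 < f < 1 ->
  let k0 := fun g => if Rlt_dec 0 g then G (Rmin g f) ^ 2 else 0 in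
  (forall z, 0 <= z <= f -> continuous k0 z) /\
  RInt k0 0 f = RInt (fun x => x ^ 2 * r x) 0 (G f).
Proof.
  intros Hf k0.
  assert (Hmono := G_mono r G Hc Hp HG).
  assert (Hmle := G_mono_le r G Hc Hp HG).
  assert (Kc : forall z, 0 <= z <= f -> continuous k0 z).
  { intros z Hz. destruct (Req_dec z 0) as [->|Nz].
    - apply cont_eps. intros eps He.
      set (a := Rmin 1 (eps / 2)).
      assert (Ha1 : a <= 1) by apply Rmin_l.
      assert (Ha2 : a <= eps/2) by apply Rmin_r.
      assert (Ha0 : 0 < a) by (apply Rmin_pos; lra).
      destruct (G_small r G Hc Hp HG a Ha0) as [eta [Heta Hsm]].
      exists (Rmin f eta). split; [apply Rmin_pos; lra|].
      intros y Hy. unfold k0. destruct (Rlt_dec 0 0); [lra|].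
      destruct (Rlt_dec 0 y) as [Py|Py].
      + assert (Rmin f eta <= f) by apply Rmin_l.
        assert (Rmin f eta <= eta) by apply Rmin_r.
        rewrite Rminus_0_r in Hy. apply Rabs_lt_between in Hy.
        assert (Hm0 : 0 < Rmin y f) by (apply Rmin_pos; lra).
        assert (Hm1 : Rmin y f <= y) by apply Rmin_l.
        assert (Hm2 : Rmin y f <= f) by apply Rmin_r.
        assert (HGs : G (Rmin y f) < a) by (apply Hsm; lra).
        destruct (HG (Rmin y f) ltac:(lra)) as [PG _].
        rewrite Rminus_0_r, Rabs_right by (apply Rle_ge, pow2_ge_0).
        assert (G (Rmin y f) ^ 2 <= a * a) by (simpl; rewrite Rmult_1_r; apply Rmult_le_compat; lra).
        nra.
      + rewrite Rminus_0_r, Rabs_R0; lra.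
    - assert (Pz : 0 < z) by lra.
      apply (continuous_ext_loc _ (fun g => G (Rmin g f) ^ 2)).
      + exists (mkposreal z Pz). intros y Hy. simpl in Hy.
        unfold ball in Hy; simpl in Hy; unfold AbsRing_ball, abs, minus, plus, opp in Hy; simpl in Hy.
        apply Rabs_lt_between in Hy. unfold k0. destruct (Rlt_dec 0 y); [reflexivity|lra].
      + apply (continuous_comp (fun g => G (Rmin g f)) (fun u => u ^ 2)); [|apply cont_sq].
        apply (continuous_comp (fun g => Rmin g f) G); [apply cont_Rmin|].
        rewrite Rmin_left by lra. apply (cont_G r G Hc Hp HG); lra. }
  split; auto.
  set (c := G f). destruct (HG f Hf) as [Pc Fc].
  set (H := fun k => RInt (fun y => y ^ 2 * r y) 0 (G k)).
  change (RInt k0 0 f = H f).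
  apply Rminus_diag_uniq.
  apply (zero_small _ (2 * c ^ 2) f); [lra| nra |].
  intros e He.
  assert (ExK : forall a b, 0 <= a <= f -> 0 <= b <= f -> ex_RInt k0 a b).
  { intros a b Ha Hb. apply (ex_RInt_continuous (V:=R_CompleteNormedModule)). intros x Hx. apply Kc.
    split. eapply Rle_trans; [|apply Hx]. apply Rmin_glb; lra.
    eapply Rle_trans; [apply Hx|]. apply Rmax_lub; lra. }
  assert (E1 : RInt k0 0 f = RInt k0 0 e + RInt k0 e f).
  { symmetry. apply (RInt_Chasles (V:=R_CompleteNormedModule)); apply ExK; lra. }
  assert (E2 : RInt k0 e f = H f - H e).
  { apply is_RInt_unique. apply (is_RInt_derive (V:=R_CompleteNormedModule) H k0).
    - intros x Hx. rewrite Rmin_left in Hx by lra. rewrite Rmax_right in Hx by lra.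
      replace (k0 x) with (G x ^ 2).
      + apply (W_deriv r G (fun y => y ^ 2)); auto. apply cont_sq. lra.
      + unfold k0. destruct (Rlt_dec 0 x); [|lra]. rewrite Rmin_left by lra. reflexivity.
    - intros x Hx. rewrite Rmin_left in Hx by lra. rewrite Rmax_right in Hx by lra.
      apply Kc; lra. }
  assert (B1 : Rabs (RInt k0 0 e) <= e * c ^ 2).
  { replace e with (e - 0) at 2 by ring. apply abs_RInt_le_const; [lra| apply ExK; lra|].
    intros x Hx. unfold k0. destruct (Rlt_dec 0 x).
    - assert (Hm0 : 0 < Rmin x f) by (apply Rmin_pos; lra).
      assert (Hm2 : Rmin x f <= f) by apply Rmin_r.
      destruct (HG (Rmin x f) ltac:(lra)) as [PG _].
      assert (G (Rmin x f) <= c) by (apply Hmle; lra).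
      rewrite Rabs_right by (apply Rle_ge, pow2_ge_0). simpl. rewrite !Rmult_1_r.
      apply Rmult_le_compat; lra.
    - rewrite Rabs_R0. apply pow2_ge_0. }
  assert (B2 : 0 <= H e <= c ^ 2 * e).
  { destruct (HG e ltac:(lra)) as [Pb Fb].
    assert (Hbc : G e <= c) by (apply Hmle; lra).
    assert (Ex1 : ex_RInt (fun y => y ^ 2 * r y) 0 (G e)).
    { apply (ex_RInt_w r (fun y => y ^ 2)); auto. apply cont_sq. lra. lra. }
    unfold H. split.
    - apply RInt_ge_0; auto; [lra|]. intros x Hx. specialize (Hp x ltac:(lra)).
      apply Rmult_le_pos; [apply pow2_ge_0|lra].
    - apply Rle_trans with (RInt (fun y => scal (G e ^ 2) (r y)) 0 (G e)).
      + apply RInt_le; auto; [lra| |].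
        * apply (ex_RInt_scal (V:=R_NormedModule)). apply ex_RInt_r; auto; lra.
        * intros x Hx. specialize (Hp x ltac:(lra)). unfold scal; simpl; unfold mult; simpl.
          apply Rmult_le_compat_r; [lra|]. simpl. nra.
      + rewrite (RInt_scal (V:=R_CompleteNormedModule) r) by (apply ex_RInt_r; auto; lra). rewrite Fb.
        unfold scal; simpl; unfold mult; simpl.
        apply Rmult_le_compat_r; [lra|]. simpl. nra. }
  rewrite E1, E2.
  replace (RInt k0 0 e + (H f - H e) - H f) with (RInt k0 0 e - H e) by ring.
  eapply Rle_trans; [apply Rabs_triang|]. rewrite Rabs_Ropp.
  rewrite (Rabs_right (H e)) by lra. nra.
Qed.


Lemma int_part (r G : R -> R)
  (Hc : forall y, continuous (fun y => r (Rmax 0 y)) y)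
  (Hp : forall w, 0 < w -> 0 < r w)
  (HG : forall g, 0 < g < 1 -> 0 < G g /\ RInt r 0 (G g) = g)
  (Hm : is_RInt_gen r (at_point 0) (Rbar_locally p_infty) 1) f :
  0 < f < 1 ->
  RInt (fun g => Rmin (G g) (G f) ^ 2) 0 1 =
  RInt_gen (fun x => Rmin (G f) x ^ 2 * r x) (at_point 0) (Rbar_locally p_infty).
Proof.
  intros Hf.
  destruct (int_G2 r G Hc Hp HG f Hf) as [Kc KI].
  set (k0 := fun g => if Rlt_dec 0 g then G (Rmin g f) ^ 2 else 0) in *.
  set (c := G f) in *. set (Q := RInt (fun x => x ^ 2 * r x) 0 c) in *.
  destruct (HG f Hf) as [Pc Fc]. assert (Pc0 : 0 < c) by exact Pc.
  assert (Hmono := G_mono r G Hc Hp HG).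
  set (m := fun g => Rmin (G g) c ^ 2).
  assert (E0 : forall x, Rmin 0 f < x < Rmax 0 f -> k0 x = m x).
  { intros x Hx. rewrite Rmin_left in Hx by lra. rewrite Rmax_right in Hx by lra.
    unfold k0, m. destruct (Rlt_dec 0 x); [|lra]. rewrite Rmin_left by lra.
    rewrite Rmin_left; [reflexivity|]. left; apply Hmono; lra. }
  assert (E1 : forall x, Rmin f 1 < x < Rmax f 1 -> (fun _ => c ^ 2) x = m x).
  { intros x Hx. rewrite Rmin_left in Hx by lra. rewrite Rmax_right in Hx by lra.
    unfold m. rewrite Rmin_right; [reflexivity|]. left; apply Hmono; lra. }
  assert (X0 : ex_RInt k0 0 f).
  { apply (ex_RInt_continuous (V:=R_CompleteNormedModule)). intros z Hz.
    rewrite Rmin_left in Hz by lra. rewrite Rmax_right in Hz by lra. apply Kc; lra. }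
  assert (LHS : RInt m 0 1 = Q + c ^ 2 * (1 - f)).
  { rewrite <- (RInt_Chasles (V:=R_CompleteNormedModule) m 0 f 1).
    - rewrite <- (RInt_ext _ _ _ _ E0), <- (RInt_ext _ _ _ _ E1), KI, RInt_const.
      unfold plus, scal; simpl; unfold mult; simpl. fold Q. ring.
    - apply (ex_RInt_ext _ _ _ _ E0); auto.
    - apply (ex_RInt_ext _ _ _ _ E1); apply ex_RInt_const. }
  change (RInt m 0 1 = RInt_gen (fun x => Rmin c x ^ 2 * r x) (at_point 0) (Rbar_locally p_infty)).
  rewrite LHS. symmetry. apply is_RInt_gen_unique.
  replace (Q + c ^ 2 * (1 - f)) with (plus Q (scal (c ^ 2) (plus (opp f) 1)))
    by (unfold plus, scal, opp; simpl; unfold mult; simpl; ring).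
  apply (is_RInt_gen_Chasles (V:=R_NormedModule) _ c).
  - apply is_RInt_gen_at_point.
    apply (is_RInt_ext (fun x => x ^ 2 * r x)).
    + intros x Hx. rewrite Rmin_left in Hx by lra. rewrite Rmax_right in Hx by lra.
      rewrite Rmin_right by lra. reflexivity.
    + apply (RInt_correct (V:=R_CompleteNormedModule)).
      apply (ex_RInt_w r (fun y => y ^ 2)); auto; [apply cont_sq|lra|lra].
  - apply (is_RInt_gen_ext (fun y => scal (c ^ 2) (r y))).
    + apply (Filter_prod _ _ _ (fun a => a = c) (fun b => c < b)).
      * reflexivity.
      * exists c. intros; auto.
      * intros a b -> Hb x Hx. simpl in Hx. rewrite Rmin_left in Hx by lra.
        rewrite Rmax_right in Hx by lra. rewrite Rmin_left by lra. reflexivity.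
    + apply (is_RInt_gen_scal (V:=R_NormedModule) r (c ^ 2) (plus (opp f) 1)).
      apply (is_RInt_gen_Chasles (V:=R_NormedModule) r 0 (opp f) 1); auto.
      apply is_RInt_gen_at_point. apply (is_RInt_swap (V:=R_NormedModule)). rewrite <- Fc.
      apply (RInt_correct (V:=R_CompleteNormedModule)). apply ex_RInt_r; auto; lra.
Qed.


Lemma ch_eps (h : R -> R -> R) w t : cont_half h w t ->
  forall eps, 0 < eps -> exists d, 0 < d /\ forall u v, 0 <= u ->
    Rabs (u - w) < d -> Rabs (v - t) < d -> Rabs (h u v - h w t) < eps.
Proof.
  intros H eps He.
  assert (L := H (ball (h w t) eps) (locally_ball _ (mkposreal eps He))).
  unfold within in L. destruct L as [d Hd].
  exists d. split; [apply cond_pos|]. intros u v Hu Hw Ht.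
  specialize (Hd (u, v)). simpl in Hd.
  assert (B : ball (w, t) d (u, v)).
  { split; simpl; unfold ball; simpl; unfold AbsRing_ball, abs, minus, plus, opp; simpl; auto. }
  specialize (Hd B Hu). unfold ball in Hd; simpl in Hd.
  unfold AbsRing_ball, abs, minus, plus, opp in Hd; simpl in Hd. exact Hd.
Qed.

Lemma ch_2d (h : R -> R -> R) y t : cont_half h (Rmax 0 y) t ->
  continuity_2d_pt (fun u v => h (Rmax 0 v) u) t y.
Proof.
  intros H eps. destruct (ch_eps h _ _ H eps (cond_pos eps)) as [d [Hd P]].
  exists (mkposreal d Hd). intros u v Hu Hv. simpl in *.
  apply P; auto. apply Rmax_l. eapply Rle_lt_trans; [apply Rmax0_lip|auto].
Qed.

Lemma ch_slice (h : R -> R -> R) s :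
  (forall w, 0 <= w -> cont_half h w s) ->
  forall y, continuous (fun y => h (Rmax 0 y) s) y.
Proof.
  intros H y. apply cont_eps. intros eps He.
  destruct (ch_eps h _ _ (H (Rmax 0 y) (Rmax_l _ _)) eps He) as [d [Hd P]].
  exists d; split; auto. intros y' Hy'. apply P. apply Rmax_l.
  eapply Rle_lt_trans; [apply Rmax0_lip|auto]. rewrite Rminus_diag, Rabs_R0; auto.
Qed.

Lemma loc_pos t : 0 < t -> locally t (fun s => 0 < s).
Proof.
  intros Ht. exists (mkposreal t Ht). intros y Hy. simpl in Hy.
  unfold ball in Hy; simpl in Hy; unfold AbsRing_ball, abs, minus, plus, opp in Hy; simpl in Hy.
  apply Rabs_lt_between in Hy. lra.
Qed.

Lemma param_deriv (rho : R -> R -> R) (h : R -> R)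
  (Hcont : forall w t, 0 <= w -> 0 < t -> cont_half rho w t)
  (Hdt : forall w t, 0 <= w -> 0 < t -> ex_derive (fun s => rho w s) t)
  (Hdtcont : forall w t, 0 <= w -> 0 < t ->
      cont_half (fun w' t' => Derive (fun s => rho w' s) t') w t)
  (Hh : forall y, continuous h y) w t : 0 < t ->
  is_derive (fun s => RInt (fun y => h y * rho (Rmax 0 y) s) 0 w) t
    (RInt (fun y => h y * Derive (fun u => rho (Rmax 0 y) u) t) 0 w).
Proof.
  intros Ht.
  assert (E : RInt (fun y => h y * Derive (fun u => rho (Rmax 0 y) u) t) 0 w =
              RInt (fun y => Derive (fun u => h y * rho (Rmax 0 y) u) t) 0 w).
  { apply RInt_ext. intros x _. rewrite Derive_scal. reflexivity. }
  rewrite E.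
  apply (is_derive_RInt_param (fun u y => h y * rho (Rmax 0 y) u)).
  - eapply filter_imp; [|apply loc_pos; exact Ht]. intros s Hs y _.
    apply ex_derive_scal. apply Hdt; auto. apply Rmax_l.
  - intros y _.
    apply continuity_2d_pt_ext with (fun u v => h v * Derive (fun z => rho (Rmax 0 v) z) u).
    { intros; rewrite Derive_scal; reflexivity. }
    apply continuity_2d_pt_mult.
    + intros eps. assert (Hy := Hh y).
      apply continuity_pt_filterlim in Hy.
      destruct (Hy eps (cond_pos eps)) as [d [Hd P]].
      exists (mkposreal d Hd). intros u v _ Hv. simpl.
      destruct (Req_dec v y) as [->|Nv].
      + rewrite Rminus_diag, Rabs_R0; apply cond_pos.
      + apply P. split; [split; [exact I|auto]|exact Hv].
    + apply (ch_2d (fun w' t' => Derive (fun s => rho w' s) t')).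
      apply Hdtcont; auto. apply Rmax_l.
  - eapply filter_imp; [|apply loc_pos; exact Ht]. intros s Hs.
    apply (ex_RInt_continuous (V:=R_CompleteNormedModule)). intros z _.
    apply (continuous_mult (K:=R_AbsRing) h (fun y => rho (Rmax 0 y) s)); auto.
    apply (ch_slice rho s). intros; apply Hcont; auto.
Qed.



Lemma cont_loc_lt (g : R -> R) t a : continuous g t -> a < g t -> locally t (fun s => a < g s).
Proof.
  intros H Ha. assert (He : 0 < g t - a) by lra.
  assert (L := H (ball (g t) (mkposreal _ He)) (locally_ball _ _)).
  eapply filter_imp; [|exact L]. intros s Hs. simpl in Hs.
  unfold ball in Hs; simpl in Hs; unfold AbsRing_ball, abs, minus, plus, opp in Hs; simpl in Hs.
  apply Rabs_lt_between in Hs. lra.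
Qed.

Lemma cont_loc_gt (g : R -> R) t a : continuous g t -> g t < a -> locally t (fun s => g s < a).
Proof.
  intros H Ha. assert (He : 0 < a - g t) by lra.
  assert (L := H (ball (g t) (mkposreal _ He)) (locally_ball _ _)).
  eapply filter_imp; [|exact L]. intros s Hs. simpl in Hs.
  unfold ball in Hs; simpl in Hs; unfold AbsRing_ball, abs, minus, plus, opp in Hs; simpl in Hs.
  apply Rabs_lt_between in Hs. lra.
Qed.

Lemma F_time_deriv (rho : R -> R -> R)
  (Hcont : forall w t, 0 <= w -> 0 < t -> cont_half rho w t)
  (Hdt : forall w t, 0 <= w -> 0 < t -> ex_derive (fun s => rho w s) t)
  (Hdtcont : forall w t, 0 <= w -> 0 < t ->
      cont_half (fun w' t' => Derive (fun s => rho w' s) t') w t) w t :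
  0 <= w -> 0 < t ->
  (forall s, RInt (fun y => rho y s) 0 w = RInt (fun y => 1 * rho (Rmax 0 y) s) 0 w) /\
  is_derive (fun s => RInt (fun y => 1 * rho (Rmax 0 y) s) 0 w) t
    (RInt (fun y => 1 * Derive (fun u => rho (Rmax 0 y) u) t) 0 w).
Proof.
  intros Hw Ht. split.
  - intros s. apply RInt_ext. intros x Hx.
    rewrite Rmin_left in Hx by lra. rewrite Rmax0_id by lra. simpl. ring.
  - apply (param_deriv rho (fun _ => 1)); auto. intros; apply continuous_const.
Qed.

Lemma G_cont_s (rho G : R -> R -> R)
  (Hpos : forall w t, 0 < w -> 0 <= t -> 0 < rho w t)
  (Hcont : forall w t, 0 <= w -> 0 < t -> cont_half rho w t)
  (Hdt : forall w t, 0 <= w -> 0 < t -> ex_derive (fun s => rho w s) t)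
  (Hdtcont : forall w t, 0 <= w -> 0 < t ->
      cont_half (fun w' t' => Derive (fun s => rho w' s) t') w t)
  (HG : forall f t, 0 < f < 1 -> 0 < t ->
      0 < G f t /\ Fcdf rho (G f t) t = f) f t :
  0 < f < 1 -> 0 < t ->
  forall d, 0 < d < G f t ->
  locally t (fun s => 0 < s /\ G f t - d < G f s < G f t + d).
Proof.
  intros Hf Ht d Hd.
  set (c := G f t) in *.
  assert (Hc : forall s, 0 < s -> forall y, continuous (fun y => rho (Rmax 0 y) s) y).
  { intros s Hs. apply ch_slice. intros; apply Hcont; auto. }
  assert (Hp : forall s, 0 < s -> forall w, 0 < w -> 0 < rho w s).
  { intros; apply Hpos; lra. }
  assert (Fi : forall s, 0 < s -> forall a b, 0 <= a -> a < b ->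
             RInt (fun y => rho y s) 0 a < RInt (fun y => rho y s) 0 b).
  { intros s Hs. apply (F_incr (fun y => rho y s)); auto. }
  destruct (HG f t Hf Ht) as [Pc Fc]. unfold Fcdf in Fc. fold c in Pc, Fc.
  assert (Hup : f < RInt (fun y => rho y t) 0 (c + d)) by (rewrite <- Fc; apply Fi; lra).
  assert (Hlo : RInt (fun y => rho y t) 0 (c - d) < f) by (rewrite <- Fc; apply Fi; lra).
  destruct (F_time_deriv rho Hcont Hdt Hdtcont (c + d) t ltac:(lra) Ht) as [Lu Du].
  destruct (F_time_deriv rho Hcont Hdt Hdtcont (c - d) t ltac:(lra) Ht) as [Ll Dl].
  assert (Cu := ex_derive_continuous (K:=R_AbsRing) (V:=R_NormedModule) _ _ (ex_intro _ _ Du)).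
  assert (Cl := ex_derive_continuous (K:=R_AbsRing) (V:=R_NormedModule) _ _ (ex_intro _ _ Dl)).
  rewrite Lu in Hup. rewrite Ll in Hlo.
  assert (Au := cont_loc_lt _ t f Cu Hup).
  assert (Al := cont_loc_gt _ t f Cl Hlo).
  assert (A := filter_and _ _ (filter_and _ _ Au Al) (loc_pos t Ht)).
  eapply filter_imp; [|exact A]. intros s [[Hu Hl] Hs]. simpl in Hu, Hl.
  rewrite <- Lu in Hu. rewrite <- Ll in Hl.
  destruct (HG f s Hf Hs) as [Ps Fs]. unfold Fcdf in Fs.
  split; auto. split.
  - destruct (Rlt_le_dec (c - d) (G f s)) as [|Hle]; auto. exfalso.
    destruct (Req_dec (G f s) (c - d)) as [E|NE].
    + rewrite E in Fs. lra.
    + assert (RInt (fun y => rho y s) 0 (G f s) < RInt (fun y => rho y s) 0 (c - d)) by (apply Fi; lra).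
      lra.
  - destruct (Rlt_le_dec (G f s) (c + d)) as [|Hle]; auto. exfalso.
    destruct (Req_dec (G f s) (c + d)) as [E|NE].
    + rewrite E in Fs. lra.
    + assert (RInt (fun y => rho y s) 0 (c + d) < RInt (fun y => rho y s) 0 (G f s)) by (apply Fi; lra).
      lra.
Qed.


Lemma int_abs_le (g q : R -> R) a b K : a <= b -> ex_RInt g a b -> ex_RInt q a b ->
  (forall y, a < y < b -> Rabs (g y) <= K * q y) ->
  Rabs (RInt g a b) <= K * RInt q a b.
Proof.
  intros Hab Eg Eq H.
  assert (Ek : ex_RInt (fun y => K * q y) a b).
  { apply (ex_RInt_scal (V:=R_NormedModule)); auto. }
  assert (Sk : RInt (fun y => K * q y) a b = K * RInt q a b).
  { apply (RInt_scal (V:=R_CompleteNormedModule)); auto. }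
  apply Rabs_le. split.
  - assert (RInt (fun y => - g y) a b <= RInt (fun y => K * q y) a b).
    { apply RInt_le; auto. apply (ex_RInt_opp (V:=R_NormedModule)); auto.
      intros y Hy. specialize (H y Hy). apply Rabs_le_between in H. lra. }
    assert (RInt (fun y => - g y) a b = - RInt g a b).
    { apply (RInt_opp (V:=R_CompleteNormedModule)); auto. }
    lra.
  - rewrite <- Sk. apply RInt_le; auto.
    intros y Hy. specialize (H y Hy). apply Rabs_le_between in H. lra.
Qed.

Lemma bound_lin (q : R -> R) c b : (forall y, continuous q y) -> (forall y, 0 <= q y) ->
  Rabs (RInt (fun y => (y - c) * q y) c b) <= Rabs (b - c) * Rabs (RInt q c b).
Proof.
  intros Hq Hp.
  assert (Cg : forall y, continuous (fun y => (y - c) * q y) y).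
  { intros y. apply (continuous_mult (K:=R_AbsRing) (fun y => y - c) q); auto.
    apply cont_eps. intros eps He; exists eps; split; auto. intros y' Hy'.
    replace (y' - c - (y - c)) with (y' - y) by ring. auto. }
  assert (Ex : forall (f : R -> R) a b, (forall y, continuous f y) -> ex_RInt f a b).
  { intros f a b' Hf. apply (ex_RInt_continuous (V:=R_CompleteNormedModule)); auto. }
  destruct (Rle_dec c b) as [Hcb|Hcb].
  - assert (0 <= RInt q c b) by (apply RInt_ge_0; auto).
    rewrite (Rabs_right (RInt q c b)) by lra. rewrite (Rabs_right (b - c)) by lra.
    apply int_abs_le; auto. intros y Hy. rewrite Rabs_mult, Rabs_right by lra.
    rewrite (Rabs_right (q y)) by (apply Rle_ge; auto).
    apply Rmult_le_compat_r; auto. lra.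
  - rewrite <- (opp_RInt_swap (V:=R_CompleteNormedModule)) by auto.
    rewrite <- (opp_RInt_swap (V:=R_CompleteNormedModule) q) by auto.
    unfold opp; simpl. rewrite !Rabs_Ropp.
    assert (0 <= RInt q b c) by (apply RInt_ge_0; auto; lra).
    rewrite (Rabs_right (RInt q b c)) by lra. rewrite (Rabs_left (b - c)) by lra.
    apply int_abs_le; auto. lra. intros y Hy. rewrite Rabs_mult, Rabs_left by lra.
    rewrite (Rabs_right (q y)) by (apply Rle_ge; auto).
    apply Rmult_le_compat_r; auto. lra.
Qed.

Lemma RInt_lin (p q : R -> R) a b c : ex_RInt p a b -> ex_RInt q a b ->
  RInt (fun y => p y - c * q y) a b = RInt p a b - c * RInt q a b.
Proof.
  intros Ep Eq.
  apply is_RInt_unique.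
  apply (is_RInt_minus (V:=R_NormedModule) p (fun y => c * q y)).
  - apply (RInt_correct (V:=R_CompleteNormedModule)); auto.
  - apply (is_RInt_scal (V:=R_NormedModule) q). apply (RInt_correct (V:=R_CompleteNormedModule)); auto.
Qed.


Ltac rring := match goal with |- ?a = ?b => change (@eq R a b); ring end.

Lemma cont_lin c y : continuous (fun y : R => y - c) y.
Proof.
  apply cont_eps. intros eps He; exists eps; split; auto. intros y' Hy'.
  replace (y' - c - (y - c)) with (y' - y) by ring. auto.
Qed.

Lemma L_time_deriv (rho G : R -> R -> R)
  (Hpos : forall w t, 0 < w -> 0 <= t -> 0 < rho w t)
  (Hcont : forall w t, 0 <= w -> 0 < t -> cont_half rho w t)
  (Hdt : forall w t, 0 <= w -> 0 < t -> ex_derive (fun s => rho w s) t)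
  (Hdtcont : forall w t, 0 <= w -> 0 < t ->
      cont_half (fun w' t' => Derive (fun s => rho w' s) t') w t)
  (Hzero : forall t, 0 < t -> rho 0 t = 0)
  (HG : forall f t, 0 < f < 1 -> 0 < t ->
      0 < G f t /\ Fcdf rho (G f t) t = f) f t :
  0 < f < 1 -> 0 < t ->
  is_derive (fun s => Lorenz rho G f s) t
    (RInt (fun y => (y - G f t) * Derive (fun u => rho (Rmax 0 y) u) t) 0 (G f t)).
Proof.
  intros Hf Ht.
  set (c := G f t).
  destruct (HG f t Hf Ht) as [Pc Fc]. unfold Fcdf in Fc. fold c in Pc, Fc.
  set (Lam := fun w s => RInt (fun y => (y - c) * rho (Rmax 0 y) s) 0 w).
  set (F1 := fun w s => RInt (fun y => 1 * rho (Rmax 0 y) s) 0 w).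
  set (A := RInt (fun y => (y - c) * Derive (fun u => rho (Rmax 0 y) u) t) 0 c).
  assert (Hc : forall s, 0 < s -> forall y, continuous (fun y => rho (Rmax 0 y) s) y).
  { intros s Hs. apply ch_slice. intros; apply Hcont; auto. }
  assert (Hq0 : forall s, 0 < s -> forall y, 0 <= rho (Rmax 0 y) s).
  { intros s Hs y. destruct (Req_dec (Rmax 0 y) 0) as [E|NE].
    - rewrite E, Hzero; lra.
    - left; apply Hpos; [|lra]. assert (0 <= Rmax 0 y) by apply Rmax_l. lra. }
  assert (CW : forall s, 0 < s -> forall (h : R -> R), (forall y, continuous h y) ->
             forall y, continuous (fun y => h y * rho (Rmax 0 y) s) y).
  { intros s Hs h Hh y. apply (continuous_mult (K:=R_AbsRing) h (fun y => rho (Rmax 0 y) s)); auto. }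
  assert (EX : forall s, 0 < s -> forall (h : R -> R), (forall y, continuous h y) ->
             forall a b, ex_RInt (fun y => h y * rho (Rmax 0 y) s) a b).
  { intros s Hs h Hh a b. apply (ex_RInt_continuous (V:=R_CompleteNormedModule)). intros; apply CW; auto. }
  assert (C1 : forall y, continuous (fun _ : R => 1) y) by (intros; apply continuous_const).
  assert (FF : forall s w, 0 <= w -> RInt (fun y => rho y s) 0 w = F1 w s).
  { intros s w Hw. apply RInt_ext. intros x Hx.
    rewrite Rmin_left in Hx by lra. rewrite Rmax0_id by lra. simpl. ring. }
  assert (KeyEq : forall s, 0 < s -> Lorenz rho G f s = Lam (G f s) s + c * f).
  { intros s Hs. destruct (HG f s Hf Hs) as [Ps Fs]. unfold Fcdf in Fs.
    unfold Lorenz, Lam.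
    rewrite (RInt_ext (fun y => (y - c) * rho (Rmax 0 y) s)
               (fun y => y * rho (Rmax 0 y) s - c * (1 * rho (Rmax 0 y) s))).
    2: { intros; rring. }
    rewrite RInt_lin; [| apply (EX s Hs (fun y => y)), cont_id | apply EX; auto].
    fold (F1 (G f s) s). rewrite <- FF by lra. rewrite Fs.
    rewrite (RInt_ext (fun y => y * rho y s) (fun y => y * rho (Rmax 0 y) s)); [lra|].
    intros x Hx. rewrite Rmin_left in Hx by lra. rewrite Rmax0_id by lra. reflexivity. }
  assert (KeyB : forall s, 0 < s ->
            Rabs (Lam (G f s) s - Lam c s) <= Rabs (G f s - c) * Rabs (F1 c s - F1 c t)).
  { intros s Hs. destruct (HG f s Hf Hs) as [Ps Fs]. unfold Fcdf in Fs.
    assert (E1 : Lam (G f s) s - Lam c s = RInt (fun y => (y - c) * rho (Rmax 0 y) s) c (G f s)).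
    { unfold Lam. rewrite <- (RInt_Chasles (V:=R_CompleteNormedModule) _ 0 c (G f s)).
      unfold plus; simpl; ring. apply EX; auto. apply cont_lin. apply EX; auto. apply cont_lin. }
    assert (E2 : RInt (fun y => rho (Rmax 0 y) s) c (G f s) = - (F1 c s - F1 c t)).
    { rewrite (RInt_ext _ (fun y => 1 * rho (Rmax 0 y) s)) by (intros; rring).
      assert (Ch := RInt_Chasles (V:=R_CompleteNormedModule) (fun y => 1 * rho (Rmax 0 y) s) 0 c (G f s)
                   (EX s Hs _ C1 0 c) (EX s Hs _ C1 c (G f s))).
      assert (H1 : F1 (G f s) s = f) by (rewrite <- FF; [exact Fs|lra]).
      assert (H2 : F1 c t = f) by (rewrite <- FF; [exact Fc|lra]).
      unfold F1 in *. unfold plus in Ch; simpl in Ch. lra. }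
    rewrite E1. eapply Rle_trans; [apply bound_lin|].
    - apply (Hc s Hs).
    - intros y. specialize (Hq0 s Hs y). lra.
    - rewrite E2, Rabs_Ropp. apply Rle_refl. }
  assert (DL : is_derive (fun s => Lam c s) t A).
  { apply (param_deriv rho (fun y => y - c)); auto. apply cont_lin. }
  assert (DF : is_derive (fun s => F1 c s) t (RInt (fun y => 1 * Derive (fun u => rho (Rmax 0 y) u) t) 0 c)).
  { apply (param_deriv rho (fun _ => 1)); auto. }
  set (B := RInt (fun y => 1 * Derive (fun u => rho (Rmax 0 y) u) t) 0 c) in DF.
  apply is_derive_Reals in DL. apply is_derive_Reals in DF. apply is_derive_Reals.
  intros eps He.
  destruct (DL (eps/2) ltac:(lra)) as [d1 H1].
  destruct (DF 1 ltac:(lra)) as [d2 H2].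
  set (K := Rabs B + 1).
  assert (HK : 0 < K) by (unfold K; assert (0 <= Rabs B) by apply Rabs_pos; lra).
  set (dd := Rmin (eps / (2 * K)) (c/2)).
  assert (Hdd1 : dd <= eps / (2 * K)) by apply Rmin_l.
  assert (Hdd2 : dd <= c / 2) by apply Rmin_r.
  assert (Hdd0 : 0 < dd) by (apply Rmin_pos; [apply Rdiv_lt_0_compat; lra|lra]).
  destruct (G_cont_s rho G Hpos Hcont Hdt Hdtcont HG f t Hf Ht dd ltac:(fold c; lra)) as [d3 H3].
  assert (Hd : 0 < Rmin d1 (Rmin d2 d3)).
  { apply Rmin_pos; [apply cond_pos| apply Rmin_pos; apply cond_pos]. }
  exists (mkposreal _ Hd). intros h Hh0 Hh. simpl in Hh.
  assert (Hm1 : Rmin d1 (Rmin d2 d3) <= d1) by apply Rmin_l.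
  assert (Hm2 : Rmin d1 (Rmin d2 d3) <= Rmin d2 d3) by apply Rmin_r.
  assert (Hm3 : Rmin d2 d3 <= d2) by apply Rmin_l.
  assert (Hm4 : Rmin d2 d3 <= d3) by apply Rmin_r.
  specialize (H1 h Hh0 ltac:(lra)). specialize (H2 h Hh0 ltac:(lra)).
  assert (Hb : ball t d3 (t + h)).
  { unfold ball; simpl; unfold AbsRing_ball, abs, minus, plus, opp; simpl.
    replace (t + h + - t) with h by ring. lra. }
  destruct (H3 (t + h) Hb) as [Hs HGs]. fold c in HGs.
  cbv beta in H1, H2 |- *.
  rewrite (KeyEq (t + h) Hs), (KeyEq t Ht). fold c.
  assert (KB := KeyB (t + h) Hs).
  set (X := Lam (G f (t + h)) (t + h) - Lam c (t + h)) in *.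
  set (Y := F1 c (t + h) - F1 c t) in *.
  assert (EQ : (Lam (G f (t + h)) (t + h) + c * f - (Lam c t + c * f)) / h - A
               = X / h + ((Lam c (t + h) - Lam c t) / h - A)).
  { unfold X. field. auto. }
  rewrite EQ. eapply Rle_lt_trans; [apply Rabs_triang|].
  assert (HX : Rabs (X / h) < eps / 2).
  { assert (Hy : Rabs (Y / h) < K).
    { unfold K. assert (Rabs (Y / h) - Rabs B <= Rabs (Y / h - B)) by apply Rabs_triang_inv. lra. }
    unfold Rdiv in *. rewrite Rabs_mult in *. rewrite Rabs_inv in *.
    set (u := / Rabs h) in *.
    assert (Hu : 0 < u) by (unfold u; apply Rinv_0_lt_compat, Rabs_pos_lt; auto).
    set (g := Rabs (G f (t + h) - c)) in *.
    assert (Hg0 : 0 <= g) by apply Rabs_pos.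
    assert (Hg : g < dd) by (unfold g; apply Rabs_def1; lra).
    assert (Rabs X * u <= g * Rabs Y * u) by (apply Rmult_le_compat_r; lra).
    assert (g * (Rabs Y * u) <= g * K) by (apply Rmult_le_compat_l; lra).
    assert (g * K < dd * K) by (apply Rmult_lt_compat_r; lra).
    assert (dd * K <= eps / (2 * K) * K) by (apply Rmult_le_compat_r; lra).
    assert (eps / (2 * K) * K = eps / 2) by (field; lra).
    rewrite Rmult_assoc in *. lra. }
  lra.
Qed.


Lemma ar_eps (g : R -> R) : filterlim g (at_right 0) (locally 0) ->
  forall eta, 0 < eta -> exists d, 0 < d /\ forall e, 0 < e < d -> Rabs (g e) < eta.
Proof.
  intros H eta He.
  assert (L := H (ball 0 (mkposreal eta He)) (locally_ball _ _)).
  destruct L as [d Hd]. exists d; split; [apply cond_pos|].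
  intros e Hed. assert (Hb : ball 0 d e).
  { unfold ball; simpl; unfold AbsRing_ball, abs, minus, plus, opp; simpl.
    rewrite Ropp_0, Rplus_0_r, Rabs_right; lra. }
  specialize (Hd e Hb ltac:(lra)). simpl in Hd.
  unfold ball in Hd; simpl in Hd; unfold AbsRing_ball, abs, minus, plus, opp in Hd; simpl in Hd.
  rewrite Ropp_0, Rplus_0_r in Hd. exact Hd.
Qed.

Lemma abs_small x : (forall eta, 0 < eta -> Rabs x < eta) -> x = 0.
Proof.
  intros H. destruct (Req_dec x 0); auto. exfalso.
  assert (0 < Rabs x) by (apply Rabs_pos_lt; auto). specialize (H _ H1). lra.
Qed.

Lemma A_eq (gamma : R) (rho : R -> R -> R)
  (Hdtcont : forall w t, 0 <= w -> 0 < t ->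
      cont_half (fun w' t' => Derive (fun s => rho w' s) t') w t)
  (Hpde : forall w t, 0 < w -> 0 < t ->
      ex_derive (fun v => Dcoef gamma rho v t * rho v t) w /\
      ex_derive_n (fun v => Dcoef gamma rho v t * rho v t) 2 w /\
      Derive (fun s => rho w s) t
        = Derive_n (fun v => Dcoef gamma rho v t * rho v t) 2 w)
  (Hbd0 : forall t, 0 < t ->
      filterlim (fun w => Dcoef gamma rho w t * rho w t) (at_right 0) (locally 0))
  (Hbd1 : forall t, 0 < t ->
      filterlim (fun w => w * Derive (fun v => Dcoef gamma rho v t * rho v t) w)
        (at_right 0) (locally 0))
  (Hbd2 : forall t, 0 < t ->
      filterlim (fun w => Derive (fun v => Dcoef gamma rho v t * rho v t) w)
        (at_right 0) (locally 0)) t c :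
  0 < t -> 0 < c ->
  RInt (fun y => (y - c) * Derive (fun u => rho (Rmax 0 y) u) t) 0 c
  = - (Dcoef gamma rho c t * rho c t).
Proof.
  intros Ht Hc.
  set (Phi := fun v => Dcoef gamma rho v t * rho v t).
  set (q := fun y => (y - c) * Derive (fun u => rho (Rmax 0 y) u) t).
  set (hf := fun y => (y - c) * Derive Phi y - Phi y).
  assert (Cq : forall y, continuous q y).
  { intros y. apply (continuous_mult (K:=R_AbsRing) (fun y => y - c) (fun y => Derive (fun u => rho (Rmax 0 y) u) t)).
    apply cont_lin.
    apply (ch_slice (fun w' t' => Derive (fun s => rho w' s) t') t). intros; apply Hdtcont; auto. }
  assert (Dh : forall y, 0 < y -> is_derive hf y (q y)).
  { intros y Hy. destruct (Hpde y t Hy Ht) as [E1 [E2 E3]].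
    assert (D1 : is_derive Phi y (Derive Phi y)) by (apply Derive_correct; exact E1).
    assert (D2 : is_derive (Derive Phi) y (Derive_n Phi 2 y)) by (apply Derive_correct; exact E2).
    assert (Dl : is_derive (fun y : R => y - c) y 1).
    { auto_derive; auto; ring. }
    assert (Dm := is_derive_mult _ _ _ _ _ Dl D2 ltac:(intros; apply Rmult_comm)).
    assert (Dt := is_derive_minus _ _ _ _ _ Dm D1).
    unfold hf. replace (q y) with (minus (plus (mult 1 (Derive Phi y)) (mult (y - c) (Derive_n Phi 2 y))) (Derive Phi y)).
    - apply (is_derive_ext (fun x => minus (mult (x - c) (Derive Phi x)) (Phi x))); [|exact Dt].
      intros; reflexivity.
    - unfold q. rewrite Rmax0_id by lra. fold Phi in E3. rewrite E3.
      unfold minus, plus, mult, opp; simpl. ring. }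
  assert (Ex : forall a b, ex_RInt q a b).
  { intros a b. apply (ex_RInt_continuous (V:=R_CompleteNormedModule)). intros; auto. }
  assert (Key : forall e, 0 < e < c ->
    RInt q 0 c + Phi c = RInt q 0 e - hf e).
  { intros e He.
    assert (I1 : RInt q e c = minus (hf c) (hf e)).
    { apply is_RInt_unique. apply (is_RInt_derive (V:=R_CompleteNormedModule)).
      - intros x Hx. rewrite Rmin_left in Hx by lra. apply Dh. lra.
      - intros; auto. }
    rewrite <- (RInt_Chasles (V:=R_CompleteNormedModule) q 0 e c) by auto.
    rewrite I1. unfold hf, minus, plus, opp; simpl. ring. }
  cut (RInt q 0 c + Phi c = 0).
  { unfold Phi. fold q. intros Z. lra. }
  apply abs_small. intros eta Heta.
  assert (L0 : filterlim (fun e => RInt q 0 e) (at_right 0) (locally 0)).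
  { assert (C0 : continuous (fun e => RInt q 0 e) 0).
    { apply (continuous_RInt_0 (V:=R_NormedModule) q 0 (fun e => RInt q 0 e)).
      apply filter_forall. intros x. apply (RInt_correct (V:=R_CompleteNormedModule)); auto. }
    change (filterlim (fun e => RInt q 0 e) (locally 0) (locally (RInt q 0 0))) in C0.
    rewrite (RInt_point (V:=R_CompleteNormedModule)) in C0.
    intros P HP. specialize (C0 P HP). unfold filtermap, at_right, within in *.
    eapply filter_imp; [|exact C0]. intros x Hx _; exact Hx. }
  set (K := Rabs c + 1).
  assert (HK : 0 < K) by (unfold K; assert (0 <= Rabs c) by apply Rabs_pos; lra).
  destruct (ar_eps _ L0 (eta / 4) ltac:(lra)) as [d0 [Hd0 P0]].
  destruct (ar_eps _ (Hbd0 t Ht) (eta / 4) ltac:(lra)) as [d1 [Hd1 P1]].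
  destruct (ar_eps _ (Hbd1 t Ht) (eta / 4) ltac:(lra)) as [d2 [Hd2 P2]].
  destruct (ar_eps _ (Hbd2 t Ht) (eta / (4 * K))) as [d3 [Hd3 P3]].
  { apply Rdiv_lt_0_compat; lra. }
  set (e := Rmin (Rmin d0 d1) (Rmin (Rmin d2 d3) c) / 2).
  assert (He : 0 < Rmin (Rmin d0 d1) (Rmin (Rmin d2 d3) c)).
  { repeat apply Rmin_pos; auto. }
  assert (M1 := Rmin_l (Rmin d0 d1) (Rmin (Rmin d2 d3) c)).
  assert (M2 := Rmin_r (Rmin d0 d1) (Rmin (Rmin d2 d3) c)).
  assert (M3 := Rmin_l d0 d1). assert (M4 := Rmin_r d0 d1).
  assert (M5 := Rmin_l (Rmin d2 d3) c). assert (M6 := Rmin_r (Rmin d2 d3) c).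
  assert (M7 := Rmin_l d2 d3). assert (M8 := Rmin_r d2 d3).
  assert (He0 : 0 < e < c) by (unfold e; lra).
  rewrite (Key e He0).
  specialize (P0 e ltac:(unfold e; lra)).
  specialize (P1 e ltac:(unfold e; lra)).
  specialize (P2 e ltac:(unfold e; lra)).
  specialize (P3 e ltac:(unfold e; lra)).
  unfold hf. fold Phi in P1, P2, P3.
  replace (RInt q 0 e - ((e - c) * Derive Phi e - Phi e))
    with (RInt q 0 e - e * Derive Phi e + c * Derive Phi e + Phi e) by ring.
  assert (Rabs (c * Derive Phi e) <= K * Rabs (Derive Phi e)).
  { rewrite Rabs_mult. apply Rmult_le_compat_r. apply Rabs_pos. unfold K; lra. }
  assert (K * Rabs (Derive Phi e) < K * (eta / (4 * K))) by (apply Rmult_lt_compat_l; lra).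
  assert (K * (eta / (4 * K)) = eta / 4) by (field; lra).
  assert (T1 := Rabs_triang (RInt q 0 e - e * Derive Phi e + c * Derive Phi e) (Phi e)).
  assert (T2 := Rabs_triang (RInt q 0 e - e * Derive Phi e) (c * Derive Phi e)).
  assert (T3 := Rabs_triang (RInt q 0 e) (- (e * Derive Phi e))).
  change (Dcoef gamma rho e t * rho e t) with (Phi e) in P1.
  rewrite Rabs_Ropp in T3. unfold Rminus in *. lra.
Qed.


Theorem mainTheorem2 (gamma : R) (rho G : R -> R -> R)
  (Hgamma : 0 < gamma < 1)
  (* positivity *)
  (Hpos : forall w t, 0 < w -> 0 <= t -> 0 < rho w t)
  (* smoothness ("sufficiently smooth") *)
  (Hcont : forall w t, 0 <= w -> 0 < t -> cont_half rho w t)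
  (Hdt : forall w t, 0 <= w -> 0 < t -> ex_derive (fun s => rho w s) t)
  (Hdtcont : forall w t, 0 <= w -> 0 < t ->
      cont_half (fun w' t' => Derive (fun s => rho w' s) t') w t)
  (* the PDE *)
  (Hpde : forall w t, 0 < w -> 0 < t ->
      ex_derive (fun v => Dcoef gamma rho v t * rho v t) w /\
      ex_derive_n (fun v => Dcoef gamma rho v t * rho v t) 2 w /\
      Derive (fun s => rho w s) t
        = Derive_n (fun v => Dcoef gamma rho v t * rho v t) 2 w)
  (* boundary conditions *)
  (Hzero : forall t, 0 < t -> rho 0 t = 0)
  (Hinf : forall t, 0 < t -> is_lim (fun w => rho w t) p_infty 0)
  (* initial condition: probability density with unit mean *)
  (Hinit0 : is_RInt_gen (fun w => rho w 0) (at_right 0) (Rbar_locally p_infty) 1)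
  (Hinit1 : is_RInt_gen (fun w => w * rho w 0) (at_right 0) (Rbar_locally p_infty) 1)
  (* conservation of total probability and wealth *)
  (Hmass : forall t, 0 < t ->
      is_RInt_gen (fun w => rho w t) (at_point 0) (Rbar_locally p_infty) 1)
  (Hmom : forall t, 0 < t ->
      is_RInt_gen (fun w => w * rho w t) (at_point 0) (Rbar_locally p_infty) 1)
  (* vanishing boundary terms at w = 0 *)
  (Hbd0 : forall t, 0 < t ->
      filterlim (fun w => Dcoef gamma rho w t * rho w t) (at_right 0) (locally 0))
  (Hbd1 : forall t, 0 < t ->
      filterlim (fun w => w * Derive (fun v => Dcoef gamma rho v t * rho v t) w)
        (at_right 0) (locally 0))
  (Hbd2 : forall t, 0 < t ->
      filterlim (fun w => Derive (fun v => Dcoef gamma rho v t * rho v t) w)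
        (at_right 0) (locally 0))
  (* G(., t) is the inverse of F(., t) *)
  (HG : forall f t, 0 < f < 1 -> 0 < t ->
      0 < G f t /\ Fcdf rho (G f t) t = f) :
  forall f t, 0 < f < 1 -> 0 < t ->
    ex_derive (fun g => Lorenz rho G g t) f /\
    ex_derive_n (fun g => Lorenz rho G g t) 2 f /\
    is_derive (fun s => Lorenz rho G f s) t
      (- (1 / Derive_n (fun g => Lorenz rho G g t) 2 f)
         * (gamma / 2 * RInt (fun g =>
              (Rmin (Derive (fun h => Lorenz rho G h t) g)
                    (Derive (fun h => Lorenz rho G h t) f)) ^ 2) 0 1)).
Proof.
  intros f t Hf Ht.
  set (r := fun y => rho y t).
  set (Gt := fun g => G g t).
  assert (Hc : forall y, continuous (fun y => r (Rmax 0 y)) y).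
  { apply (ch_slice rho t). intros; apply Hcont; auto. }
  assert (Hp : forall w, 0 < w -> 0 < r w) by (intros; unfold r; apply Hpos; lra).
  assert (HGt : forall g, 0 < g < 1 -> 0 < Gt g /\ RInt r 0 (Gt g) = g).
  { intros g Hg. exact (HG g t Hg Ht). }
  assert (Hm : is_RInt_gen r (at_point 0) (Rbar_locally p_infty) 1) by exact (Hmass t Ht).
  destruct (Lor_spatial r Gt Hc Hp HGt f Hf) as [X1 [X2 [X3 X4]]].
  split; [exact X1|]. split; [exact X2|].
  destruct (HG f t Hf Ht) as [Pc _].
  assert (TD := L_time_deriv rho G Hpos Hcont Hdt Hdtcont Hzero HG f t Hf Ht).
  rewrite (A_eq gamma rho Hdtcont Hpde Hbd0 Hbd1 Hbd2 t (G f t) Ht Pc) in TD.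
  assert (E3 : Derive_n (fun g => Lorenz rho G g t) 2 f = 1 / rho (G f t) t) by exact X3.
  assert (E4 : RInt (fun g => (Rmin (Derive (fun h => Lorenz rho G h t) g)
                    (Derive (fun h => Lorenz rho G h t) f)) ^ 2) 0 1
               = RInt (fun g => Rmin (Gt g) (Gt f) ^ 2) 0 1).
  { apply RInt_ext. intros x Hx. rewrite Rmin_left in Hx by lra. rewrite Rmax_right in Hx by lra.
    assert (Y1 : Derive (fun h => Lorenz rho G h t) x = Gt x) by exact (X4 x Hx).
    assert (Y2 : Derive (fun h => Lorenz rho G h t) f = Gt f) by exact (X4 f Hf).
    rewrite Y1, Y2. reflexivity. }
  rewrite E3, E4, (int_part r Gt Hc Hp HGt Hm f Hf).
  replace (- (1 / (1 / rho (G f t) t)) *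
     (gamma / 2 * RInt_gen (fun x => Rmin (Gt f) x ^ 2 * r x) (at_point 0) (Rbar_locally p_infty)))
    with (- (Dcoef gamma rho (G f t) t * rho (G f t) t)); [exact TD|].
  unfold Dcoef. specialize (Hpos (G f t) t Pc ltac:(lra)).
  unfold Gt, r. field. lra.
Qed.
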